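(* Let $(X,d_X)$ be a proper, doubling metric space and $p\in X$. Assume there is an open neighborhood $V$ of $p$ such that $X$ is uniformly comparable $\eta$-self-quasisymmetric at the points of a dense subset of $V$. Then $X$ admits an $\eta'$-quasisymmetric embedding into every weak tangent in $WT_p(X)$, where $\eta'(t)=1/\eta^{-1}(1/t)$.
   Context: $\eta$ is a homeomorphism of $[0,\infty)$; a homeomorphism $f$ (onto its image) is $\eta$-quasisymmetric if $d(f(x),f(y))/d(f(x),f(z))\le\eta(d(x,y)/d(x,z))$ for $x\ne z$. $X$ is comparable $\eta$-self-quasisymmetric at $x$ if there are $r_x>0$ and $C_x>0$ such that for every $0<r<r_x$ there is a subset $U\subset B(x,r)$ with $x\in U$, $r/C_x\le\operatorname{diam}U\le C_xr$, and an $\eta$-quasisymmetric homeomorphism from $U$ onto $X$. It is uniformly comparable $\eta$-self-quasisymmetric on a set $A$ if this holds for all $x\in A$ with constants $r_x=r_0$ and $C_x=C$ independent of $x$. Proper: closed balls compact; doubling: every set of diameter $d$ covered by a bounded number of sets of diameter $\le d/2$. A weak tangent of $X$ at $p$ is a pointed Gromov–Hausdorff limit of $(X,p_n,d_X/\lambda_n)$ with $\lambda_n\to0^+$, $p_n\to p$ (pointed GH convergence $(X_n,p_n,d_n)\to(Z,z,d)$, $Z$ complete: for every $r,\varepsilon>0$, for large $n$ there is a map $g:B(p_n,r)\to Z$, $g(p_n)=z$, additive distortion $<\varepsilon$, and $B(z,r-\varepsilon)$ in the $\varepsilon$-neighborhood of $g(B(p_n,r))$); $WT_p(X)$ is the set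 of weak tangents at $p$. *)

(* Defs.v *)
From Stdlib Require Import Reals List.
Open Scope R_scope.

Section MetricDefs.
Context {X : Type} (d : X -> X -> R).

Definition is_metric : Prop :=
  (forall x y, 0 <= d x y) /\ (forall x y, d x y = 0 <-> x = y) /\
  (forall x y, d x y = d y x) /\ (forall x y z, d x z <= d x y + d y z).

Definition ball (x : X) (r : R) : X -> Prop := fun y => d x y < r.

Definition is_open (U : X -> Prop) : Prop :=
  forall x, U x -> exists e, 0 < e /\ forall y, d x y < e -> U y.

Definition is_compact (K : X -> Prop) : Prop :=
  forall (I : Type) (U : I -> X -> Prop), (forall i, is_open (U i)) ->
  (forall x, K x -> exists i, U i x) ->
  exists l : list I, forall x, K x -> exists i, In i l /\ U i x.

Definition proper : Prop := forall x r, is_compact (fun y => d x y <= r).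

Definition is_diam (A : X -> Prop) (D : R) : Prop :=
  is_lub (fun t => exists x y, A x /\ A y /\ t = d x y) D.

Definition doubling : Prop :=
  exists N : nat, forall (A : X -> Prop) (D : R), is_diam A D ->
    exists l : list (X -> Prop), (length l <= N)%nat /\
      (forall S, In S l -> forall x y, S x -> S y -> d x y <= D / 2) /\
      (forall x, A x -> exists S, In S l /\ S x).

Definition dense_in (D V : X -> Prop) : Prop :=
  forall v, V v -> forall e, 0 < e -> exists x, D x /\ d v x < e.

Definition complete : Prop :=
  forall u : nat -> X,
    (forall e, 0 < e -> exists N, forall m n, (N <= m)%nat -> (N <= n)%nat -> d (u m) (u n) < e) ->
    exists l, forall e, 0 < e -> exists N, forall n, (N <= n)%nat -> d (u n) l < e.

End MetricDefs.

Definition cont_nonneg (g : R -> R) : Prop :=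
  forall t, 0 <= t -> forall e, 0 < e -> exists de, 0 < de /\
    forall s, 0 <= s -> Rabs (s - t) < de -> Rabs (g s - g t) < e.

Definition homeo_pair (eta etai : R -> R) : Prop :=
  (forall t, 0 <= t -> 0 <= eta t) /\ (forall s, 0 <= s -> 0 <= etai s) /\
  (forall t, 0 <= t -> etai (eta t) = t) /\ (forall s, 0 <= s -> eta (etai s) = s) /\
  cont_nonneg eta /\ cont_nonneg etai.

Definition eta_prime (etai : R -> R) (t : R) : R :=
  if Req_EM_T t 0 then 0 else / etai (/ t).

Section QS.
Context {X Y : Type} (dX : X -> X -> R) (dY : Y -> Y -> R).

Definition qs_embedding (A : X -> Prop) (f : X -> Y) (eta : R -> R) : Prop :=
  (forall x y, A x -> A y -> f x = f y -> x = y) /\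
  (forall x, A x -> forall e, 0 < e -> exists de, 0 < de /\
     forall y, A y -> dX x y < de -> dY (f x) (f y) < e) /\
  (forall x, A x -> forall e, 0 < e -> exists de, 0 < de /\
     forall y, A y -> dY (f x) (f y) < de -> dX x y < e) /\
  (forall x y z, A x -> A y -> A z -> x <> z ->
     dY (f x) (f y) / dY (f x) (f z) <= eta (dX x y / dX x z)).

Definition qs_homeo_onto (A : X -> Prop) (f : X -> Y) (eta : R -> R) : Prop :=
  qs_embedding A f eta /\ (forall w, exists u, A u /\ f u = w).
End QS.

Section SelfQS.
Context {X : Type} (d : X -> X -> R) (eta : R -> R).

Definition comparable_self_qs_data (x : X) (r0 C : R) : Prop :=
  0 < r0 /\ 0 < C /\
  forall r, 0 < r -> r < r0 ->
    exists (U : X -> Prop) (f : X -> X),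
      (forall y, U y -> ball d x r y) /\ U x /\
      (exists D, is_diam d U D /\ r / C <= D /\ D <= C * r) /\
      qs_homeo_onto d d U f eta.

Definition comparable_self_qs (x : X) : Prop :=
  exists r0 C, comparable_self_qs_data x r0 C.

Definition unif_comparable_self_qs (A : X -> Prop) : Prop :=
  exists r0 C, forall x, A x -> comparable_self_qs_data x r0 C.
End SelfQS.

(* pointed Gromov-Hausdorff convergence of (X, p_n, d / lam_n) to (Z, z, dZ) *)
Definition pGH_conv {X Z : Type} (d : X -> X -> R) (lam : nat -> R)
  (ps : nat -> X) (dZ : Z -> Z -> R) (z : Z) : Prop :=
  forall r e, 0 < r -> 0 < e -> exists N, forall n, (N <= n)%nat ->
    exists g : X -> Z,
      g (ps n) = z /\
      (exists del, del < e /\ forall a b, d (ps n) a / lam n < r -> d (ps n) b / lam n < r ->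
          Rabs (dZ (g a) (g b) - d a b / lam n) <= del) /\
      (forall w, dZ z w < r - e -> exists a, d (ps n) a / lam n < r /\ dZ w (g a) < e).

Definition weak_tangent {X Z : Type} (d : X -> X -> R) (p : X)
  (dZ : Z -> Z -> R) (z : Z) : Prop :=
  is_metric dZ /\ complete dZ /\
  exists (lam : nat -> R) (ps : nat -> X),
    (forall n, 0 < lam n) /\ Un_cv lam 0 /\ Un_cv (fun n => d (ps n) p) 0 /\
    pGH_conv d lam ps dZ z.

(* Main.v *)
Require Import Defs.
From Stdlib Require Import Reals.
From Stdlib Require Import Lra Lia List ClassicalEpsilon Classical.
Open Scope R_scope.


Lemma cont_abs (g : R -> R) : cont_nonneg g -> continuity (fun t => g (Rabs t)).
Proof.
  intros H x. unfold continuity_pt, continue_in, limit1_in, limit_in. simpl. unfold R_dist.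
  intros e He. destruct (H (Rabs x) (Rabs_pos x) e He) as [de [Hde H2]].
  exists de. split; [exact Hde|]. intros y [_ Hy].
  apply H2; [apply Rabs_pos|]. eapply Rle_lt_trans; [apply Rabs_triang_inv2|]. exact Hy.
Qed.

Lemma eta0 eta etai : homeo_pair eta etai -> eta 0 = 0.
Proof.
  intros (Hp & Hip & Hie & Hei & Hc & Hci).
  pose proof (Hp 0 (Rle_refl 0)) as H0.
  destruct (Rle_lt_or_eq_dec _ _ H0) as [Hlt|]; [|auto].
  exfalso. remember (eta 0) as a eqn:Ha.
  set (t1 := etai (a/2)). set (t2 := etai (2*a)).
  assert (E1 : eta t1 = a/2) by (apply Hei; lra).
  assert (E2 : eta t2 = 2*a) by (apply Hei; lra).
  assert (P1 : 0 <= t1) by (apply Hip; lra).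
  assert (P2 : 0 <= t2) by (apply Hip; lra).
  assert (N1 : t1 <> 0) by (intro E; rewrite E in E1; lra).
  assert (N2 : t2 <> 0) by (intro E; rewrite E in E2; lra).
  assert (Q1 : 0 < t1) by (destruct P1; auto; congruence).
  assert (Q2 : 0 < t2) by (destruct P2; auto; congruence).
  pose (h := fun t => eta (Rabs t) - a).
  assert (Hh : continuity h) by (apply continuity_minus; [apply cont_abs; auto| apply continuity_const; intros ? ?; auto]).
  assert (key : forall u, t1 <= u \/ t2 <= u -> h u = 0 -> False).
  { intros u Hu Hu0. unfold h in Hu0. rewrite Rabs_right in Hu0 by lra.
    assert (eta u = eta 0) by lra.
    assert (u = 0). { rewrite <- (Hie u) by lra. rewrite H. apply Hie; lra. }
    subst u. destruct Hu; lra. }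
  destruct (Rle_dec t1 t2).
  - destruct (IVT_cor h t1 t2 Hh r) as [u [Hu1 Hu2]].
    { unfold h. rewrite !Rabs_right by lra. rewrite E1, E2. nra. }
    apply (key u); [left; lra|auto].
  - destruct (IVT_cor h t2 t1 Hh) as [u [Hu1 Hu2]]. lra.
    { unfold h. rewrite !Rabs_right by lra. rewrite E1, E2. nra. }
    apply (key u); [right; lra|auto].
Qed.

Lemma eta_strict eta etai : homeo_pair eta etai -> forall s t, 0 <= s -> s < t -> eta s < eta t.
Proof.
  intros HH s t Hs Hst. pose proof (eta0 _ _ HH) as E0.
  destruct HH as (Hp & Hip & Hie & Hei & Hc & Hci).
  destruct (Rlt_le_dec (eta s) (eta t)) as [|Hle]; [auto|exfalso].
  destruct (Req_dec (eta s) (eta t)) as [Heq|Hne].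
  { assert (s = t) by (rewrite <- (Hie s), <- (Hie t) by lra; congruence). lra. }
  assert (Hlt : eta t < eta s) by lra.
  pose (h := fun u => eta (Rabs u) - eta t).
  assert (Hh : continuity h) by (apply continuity_minus; [apply cont_abs; auto| apply continuity_const; intros ? ?; auto]).
  destruct (IVT_cor h 0 s Hh Hs) as [u [Hu1 Hu2]].
  { unfold h. rewrite Rabs_R0, E0. rewrite Rabs_right by lra.
    pose proof (Hp t ltac:(lra)). nra. }
  unfold h in Hu2. rewrite Rabs_right in Hu2 by lra.
  assert (u = t) by (rewrite <- (Hie u), <- (Hie t) by lra; f_equal; lra). lra.
Qed.

Lemma eta_mono eta etai : homeo_pair eta etai -> forall s t, 0 <= s -> s <= t -> eta s <= eta t.
Proof.
  intros HH s t Hs Hst. destruct (Rle_lt_or_eq_dec _ _ Hst).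
  - left. apply (eta_strict _ _ HH); auto.
  - subst; lra.
Qed.

Lemma etai_strict eta etai : homeo_pair eta etai -> forall s t, 0 <= s -> s < t -> etai s < etai t.
Proof.
  intros HH s t Hs Hst. pose proof HH as (Hp & Hip & Hie & Hei & Hc & Hci).
  destruct (Rlt_le_dec (etai s) (etai t)) as [|Hle]; [auto|exfalso].
  assert (eta (etai t) <= eta (etai s)) by (apply (eta_mono _ _ HH); auto; apply Hip; lra).
  rewrite !Hei in H by lra. lra.
Qed.

Lemma etai0 eta etai : homeo_pair eta etai -> etai 0 = 0.
Proof.
  intros HH. pose proof (eta0 _ _ HH). destruct HH as (Hp & Hip & Hie & _).
  rewrite <- H at 1. apply Hie. lra.
Qed.

Lemma etap_pos eta etai : homeo_pair eta etai -> forall t, 0 < t -> 0 < eta_prime etai t.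
Proof.
  intros HH t Ht. unfold eta_prime. destruct (Req_EM_T t 0); [lra|].
  apply Rinv_0_lt_compat. rewrite <- (etai0 _ _ HH) at 1.
  apply (etai_strict _ _ HH); [lra|]. apply Rinv_0_lt_compat; auto.
Qed.

Lemma etap_0 etai : eta_prime etai 0 = 0.
Proof. unfold eta_prime. destruct (Req_EM_T 0 0); lra. Qed.

Lemma etap_mono eta etai : homeo_pair eta etai -> forall s t, 0 < s -> s <= t -> eta_prime etai s <= eta_prime etai t.
Proof.
  intros HH s t Hs Hst. unfold eta_prime.
  destruct (Req_EM_T s 0); [lra|]. destruct (Req_EM_T t 0); [lra|].
  assert (0 < etai (/t)). { rewrite <- (etai0 _ _ HH) at 1. apply (etai_strict _ _ HH); [lra|]. apply Rinv_0_lt_compat; lra. }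
  apply Rinv_le_contravar; auto.
  destruct (Rle_lt_or_eq_dec _ _ Hst) as [Hl|Hl]; [|subst; lra].
  left. apply (etai_strict _ _ HH). left; apply Rinv_0_lt_compat; lra.
  apply Rinv_lt_contravar; nra.
Qed.

Lemma etap_small eta etai : homeo_pair eta etai -> forall e, 0 < e -> exists de, 0 < de /\
  forall t, 0 <= t -> t < de -> eta_prime etai t < e.
Proof.
  intros HH e He. pose proof HH as (Hp & Hip & Hie & Hei & _).
  set (T := 2 / e).
  assert (HT : 0 < T) by (unfold T; apply Rdiv_lt_0_compat; lra).
  assert (HeT : 0 < eta T). { rewrite <- (eta0 _ _ HH). apply (eta_strict _ _ HH); lra. }
  exists (/ eta T). split; [apply Rinv_0_lt_compat; auto|].
  intros t Ht Htd. destruct (Req_dec t 0) as [->|Hn]; [rewrite etap_0; auto|].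
  unfold eta_prime. destruct (Req_EM_T t 0); [lra|].
  assert (/ / eta T < / t) by (apply Rinv_lt_contravar; [apply Rmult_lt_0_compat; [lra|apply Rinv_0_lt_compat; auto] | auto]).
  rewrite Rinv_inv in H.
  assert (T < etai (/t)). { rewrite <- (Hie T) at 1 by lra. apply (etai_strict _ _ HH); lra. }
  assert (/ etai (/t) < / T) by (apply Rinv_lt_contravar; nra).
  unfold T in H1. rewrite Rinv_div in H1. lra.
Qed.

Lemma div_nonneg a b : 0 <= a -> 0 < b -> 0 <= a / b.
Proof. intros. unfold Rdiv. apply Rmult_le_pos; [auto|left; apply Rinv_0_lt_compat; auto]. Qed.

Lemma etai_mono eta etai : homeo_pair eta etai -> forall s t, 0 <= s -> s <= t -> etai s <= etai t.
Proof.
  intros HH s t Hs Hst. destruct (Rle_lt_or_eq_dec _ _ Hst).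
  - left. apply (etai_strict _ _ HH); auto.
  - subst; lra.
Qed.

Lemma etap_nonneg eta etai : homeo_pair eta etai -> forall t, 0 <= t -> 0 <= eta_prime etai t.
Proof.
  intros HH t Ht. destruct Ht as [Ht|<-]. left; apply (etap_pos _ _ HH); auto.
  rewrite etap_0; lra.
Qed.

Lemma d_pos {X} (d : X -> X -> R) : is_metric d -> forall x y, x <> y -> 0 < d x y.
Proof.
  intros (H0 & H1 & _) x y Hxy. destruct (H0 x y); auto. exfalso; apply Hxy, H1; auto.
Qed.

Lemma inv_qs {X} (d : X -> X -> R) eta etai (U : X -> Prop) (f F : X -> X) :
  is_metric d -> homeo_pair eta etai -> qs_embedding d d U f eta ->
  (forall w, U (F w) /\ f (F w) = w) ->
  forall a b c, a <> c -> d (F a) (F b) <= eta_prime etai (d a b / d a c) * d (F a) (F c).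
Proof.
  intros Hm HH (Hinj & _ & _ & Hq) HF a b c Hac.
  pose proof Hm as (H0 & H1 & Hs & Ht).
  destruct (HF a) as [Ua Ea]. destruct (HF b) as [Ub Eb]. destruct (HF c) as [Uc Ec].
  assert (Hdac : 0 < d a c) by (apply d_pos; auto).
  assert (Huw : F a <> F c) by (intro E; apply Hac; rewrite <- Ea, <- Ec, E; auto).
  destruct (classic (F a = F b)) as [E|Huv].
  { rewrite E. rewrite (proj2 (H1 _ _) eq_refl). 
    apply Rmult_le_pos; [apply (etap_nonneg _ _ HH)|apply H0].
    apply div_nonneg; auto. }
  assert (Hab : a <> b) by (intro E; apply Huv; subst; auto).
  assert (Hdab : 0 < d a b) by (apply d_pos; auto).
  assert (Hduv : 0 < d (F a) (F b)) by (apply d_pos; auto).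
  assert (Hduw : 0 < d (F a) (F c)) by (apply d_pos; auto).
  specialize (Hq (F a) (F c) (F b) Ua Uc Ub Huv).
  rewrite Ea, Eb, Ec in Hq.
  set (s := d a b / d a c).
  assert (Hsp : 0 < s) by (unfold s; apply Rdiv_lt_0_compat; auto).
  assert (Hinv : / s = d a c / d a b) by (unfold s; field; lra).
  pose proof HH as (Hp & Hip & Hie & Hei & _).
  assert (Hle : etai (/ s) <= d (F a) (F c) / d (F a) (F b)).
  { rewrite Hinv. rewrite <- (Hie (d (F a) (F c) / d (F a) (F b))) by (apply div_nonneg; lra).
    apply (etai_mono _ _ HH); auto. apply div_nonneg; lra. }
  assert (Hpos : 0 < etai (/ s)).
  { rewrite <- (etai0 _ _ HH). apply (etai_strict _ _ HH); [lra|]. apply Rinv_0_lt_compat; auto. }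
  unfold eta_prime. destruct (Req_EM_T s 0); [lra|].
  apply Rmult_le_reg_l with (r := etai (/ s)); auto.
  rewrite <- Rmult_assoc, Rinv_r, Rmult_1_l by lra.
  apply Rmult_le_reg_r with (r := / d (F a) (F b)). apply Rinv_0_lt_compat; auto.
  rewrite Rmult_assoc, Rinv_r by lra. unfold Rdiv in Hle. lra.
Qed.

Lemma Rabs_le_between x a : Rabs x <= a -> - a <= x <= a.
Proof. intros H. pose proof (Rle_abs x). pose proof (Rle_abs (-x)). rewrite Rabs_Ropp in H1. lra. Qed.

Lemma diam_ub {X} (d : X -> X -> R) U D : is_diam d U D -> forall u v, U u -> U v -> d u v <= D.
Proof. intros [Hub _] u v Hu Hv. apply Hub. exists u, v; auto. Qed.

Lemma diam_gap {X} (d : X -> X -> R) U D : is_diam d U D -> forall t, t < D -> exists u v, U u /\ U v /\ t < d u v.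
Proof.
  intros [Hub Hl] t Ht. apply NNPP; intro Hn.
  assert (D <= t). { apply Hl. intros s (u & v & Hu & Hv & ->).
    destruct (Rle_dec (d u v) t) as [|Hnl]; auto. exfalso; apply Hn. exists u, v; repeat split; auto; lra. }
  lra.
Qed.

Lemma open_ball_i {X} (d : X -> X -> R) (P : Prop) i e : is_metric d ->
  is_open d (fun y => P /\ d i y < e).
Proof.
  intros (H0 & H1 & Hs & Ht) y [HP Hy]. exists (e - d i y). split; [lra|].
  intros y' Hy'. split; auto. pose proof (Ht i y y'). lra.
Qed.

Lemma bounded_X {X} (d : X -> X -> R) eta etai x r0 C : is_metric d -> homeo_pair eta etai ->
  comparable_self_qs_data d eta x r0 C -> exists M, forall a b, d a b <= M.
Proof.
  intros Hm HH (Hr0 & HC & Hdat).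
  destruct (Hdat (r0/2) ltac:(lra) ltac:(lra)) as (U & f & HUb & HUx & (DU & HD & HD1 & HD2) & (Hq & Hon)).
  assert (HDU : 0 < DU). { assert (0 < r0 / 2 / C) by (apply Rdiv_lt_0_compat; lra). lra. }
  destruct (diam_gap d U DU HD 0 HDU) as (u0 & w0 & Hu0 & Hw0 & Hd0).
  pose proof Hq as (Hinj & _ & _ & Hqs).
  pose proof Hm as (H0 & H1 & Hs & Ht).
  assert (Hne : u0 <> w0) by (intro E; subst; rewrite (proj2 (H1 _ _) eq_refl) in Hd0; lra).
  assert (Hfne : f u0 <> f w0) by (intro E; apply Hne; apply Hinj; auto).
  assert (Hdf : 0 < d (f u0) (f w0)) by (apply d_pos; auto).
  set (K := eta (DU / d u0 w0) * d (f u0) (f w0)).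
  assert (Hy : forall y, U y -> d (f u0) (f y) <= K).
  { intros y Hy. specialize (Hqs u0 y w0 Hu0 Hy Hw0 Hne).
    assert (eta (d u0 y / d u0 w0) <= eta (DU / d u0 w0)).
    { apply (eta_mono _ _ HH). apply div_nonneg; auto. unfold Rdiv. apply Rmult_le_compat_r.
      left; apply Rinv_0_lt_compat; auto. apply (diam_ub d U DU HD); auto. }
    unfold K. apply Rmult_le_reg_r with (r := / d (f u0) (f w0)). apply Rinv_0_lt_compat; auto.
    rewrite Rmult_assoc, Rinv_r, Rmult_1_r by lra. pose proof (Rle_trans _ _ _ Hqs H) as Hq2. unfold Rdiv at 1 in Hq2. lra. }
  exists (2 * K). intros a b.
  destruct (Hon a) as (ua & Ua & <-). destruct (Hon b) as (ub & Ub & <-).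
  pose proof (Hy ua Ua) as Ka. pose proof (Hy ub Ub) as Kb. pose proof (Ht (f ua) (f u0) (f ub)) as Kt.
  rewrite (Hs (f ua) (f u0)) in Kt. lra.
Qed.

Lemma sep_X {X} (d : X -> X -> R) (p : X) M : is_metric d -> proper d -> (forall a b, d a b <= M) ->
  forall e, 0 < e -> exists L : list X, forall x, exists q, In q L /\ d x q < e.
Proof.
  intros Hm Hp HM e He.
  destruct (Hp p M X (fun i y => True /\ d i y < e)) as [l Hl].
  - intro i. apply open_ball_i; auto.
  - intros x _. exists x. split; auto. destruct Hm as (_ & H1 & _). rewrite (proj2 (H1 _ _) eq_refl); auto.
  - exists l. intro x. destruct (Hl x (HM p x)) as (i & Hi & _ & Hd). exists i. split; auto.
    destruct Hm as (_ & _ & Hs & _). rewrite Hs; auto.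
Qed.

Lemma TB_Z {X Z} (d : X -> X -> R) (dZ : Z -> Z -> R) lam ps z :
  is_metric d -> proper d -> is_metric dZ -> (forall n, 0 < lam n) -> pGH_conv d lam ps dZ z ->
  forall eps, 0 < eps -> exists T : list Z, forall w, dZ z w < 3 -> exists c, In c T /\ dZ c w < eps.
Proof.
  intros Hm Hp HmZ Hl Hg eps Heps.
  set (e := Rmin (eps / 3) 1).
  assert (He : 0 < e) by (unfold e; apply Rmin_glb_lt; lra).
  assert (He1 : e <= 1) by apply Rmin_r.
  assert (He2 : e <= eps/3) by apply Rmin_l.
  clearbody e.
  destruct (Hg 7 e ltac:(lra) He) as [N HN].
  destruct (HN N (le_n N)) as (g & Hgz & (del & Hdel & Hdist) & Happ).
  assert (HL : 0 < lam N) by apply Hl.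
  destruct (Hp (ps N) (6 * lam N) X (fun i y => d (ps N) i < 7 * lam N /\ d i y < e * lam N)) as [l Hcov].
  - intro i. apply open_ball_i; auto.
  - intros x Hx. exists x. split; [lra|]. destruct Hm as (_ & H1 & _). rewrite (proj2 (H1 _ _) eq_refl). nra.
  - exists (map g l). intros w Hw.
    destruct (Happ w ltac:(lra)) as (a & Ha & Hwa).
    pose proof HmZ as (HZ0 & HZ1 & HZs & HZt).
    assert (Hpp : d (ps N) (ps N) / lam N < 7).
    { destruct Hm as (_ & H1 & _). rewrite (proj2 (H1 _ _) eq_refl). unfold Rdiv; rewrite Rmult_0_l; lra. }
    pose proof (Hdist (ps N) a Hpp Ha) as Hd1. rewrite Hgz in Hd1.
    destruct Hm as (_ & H1 & _).
    assert (Hda : d (ps N) a / lam N < 3 + 2 * e).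
    { pose proof (HZt z w (g a)) as T1.
      apply Rabs_le_between in Hd1. lra. }
    assert (HaK : d (ps N) a <= 6 * lam N).
    { apply Rmult_lt_compat_r with (r := lam N) in Hda; auto. unfold Rdiv in Hda.
      rewrite Rmult_assoc, Rinv_l, Rmult_1_r in Hda by lra. nra. }
    destruct (Hcov a HaK) as (i & Hi & Hi1 & Hi2).
    exists (g i). split; [apply in_map; auto|].
    assert (Hpi : d (ps N) i / lam N < 7).
    { apply Rmult_lt_reg_r with (r := lam N); auto. unfold Rdiv. rewrite Rmult_assoc, Rinv_l by lra. lra. }
    pose proof (Hdist i a Hpi Ha) as Hd2. apply Rabs_le_between in Hd2.
    assert (d i a / lam N < e).
    { apply Rmult_lt_reg_r with (r := lam N); auto. unfold Rdiv. rewrite Rmult_assoc, Rinv_l by lra. lra. }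
    pose proof (HZt (g i) (g a) w). rewrite (HZs w (g a)) in Hwa. lra.
Qed.

Lemma div_lt_of x c L : 0 < L -> x < c * L -> x / L < c.
Proof. intros HL H. apply Rmult_lt_reg_r with (r := L); auto. unfold Rdiv. rewrite Rmult_assoc, Rinv_l, Rmult_1_r by lra. lra. Qed.

Lemma inv_S_pos k : 0 < / (INR k + 1).
Proof. apply Rinv_0_lt_compat. pose proof (pos_INR k). lra. Qed.

Lemma inv_S_le1 k : / (INR k + 1) <= 1.
Proof. pose proof (pos_INR k). rewrite <- Rinv_1. apply Rinv_le_contravar; lra. Qed.

Lemma data_k {X Z} (d : X -> X -> R) (dZ : Z -> Z -> R) p eta etai (V D : X -> Prop) r0 C lam ps z :
  is_metric d -> homeo_pair eta etai -> is_open d V -> V p -> (forall x, D x -> V x) -> dense_in d D V ->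
  (forall x, D x -> comparable_self_qs_data d eta x r0 C) -> (forall n, 0 < lam n) -> Un_cv lam 0 ->
  Un_cv (fun n => d (ps n) p) 0 -> pGH_conv d lam ps dZ z -> is_metric dZ ->
  forall k : nat, exists (L : R) (F : X -> X) (g : X -> Z),
   0 < L /\
   (forall a b c, a <> c -> d (F a) (F b) <= eta_prime etai (d a b / d a c) * d (F a) (F c)) /\
   (forall a b, d (F a) (F b) <= C * L) /\
   (forall a, exists c, L / (4 * C) <= d (F a) (F c)) /\
   (forall a b, Rabs (dZ (g (F a)) (g (F b)) - d (F a) (F b) / L) <= / (INR k + 1)) /\
   (forall a, dZ z (g (F a)) < 3).
Proof.
  intros Hm HH HV Vp HDV Hden Hdat Hl Hlc Hpc Hg HmZ k.
  pose proof Hm as (H0 & H1 & Hs & Ht).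
  destruct (HV p Vp) as (eV & HeV & HeVb).
  assert (Hr0 : exists x, D x) by (destruct (Hden p Vp 1 ltac:(lra)) as (x & Hx & _); eauto).
  destruct Hr0 as [x0 Hx0]. destruct (Hdat x0 Hx0) as (Hr0 & HC & _).
  destruct (Hlc r0 Hr0) as [N1 HN1].
  destruct (Hpc eV HeV) as [N2 HN2].
  destruct (Hg 3 (/ (INR k + 1)) ltac:(lra) (inv_S_pos k)) as [N3 HN3].
  set (n := max N1 (max N2 N3)).
  assert (Hn1 : (n >= N1)%nat) by (unfold n; lia).
  assert (Hn2 : (n >= N2)%nat) by (unfold n; lia).
  assert (Hn3 : (N3 <= n)%nat) by (unfold n; lia).
  clearbody n.
  specialize (HN1 n Hn1). specialize (HN2 n Hn2). unfold R_dist in HN1, HN2.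
  rewrite Rminus_0_r in HN1, HN2. rewrite Rabs_right in HN1 by (left; apply Hl).
  rewrite Rabs_right in HN2 by (apply Rle_ge, H0).
  assert (Vn : V (ps n)) by (apply HeVb; rewrite Hs; auto).
  destruct (Hden (ps n) Vn (lam n) (Hl n)) as (x & Dx & Hx).
  destruct (Hdat x Dx) as (_ & _ & Hd).
  destruct (Hd (lam n) (Hl n) HN1) as (U & f & HUb & HUx & (DU & HDU & HD1 & HD2) & (Hq & Hon)).
  destruct (HN3 n Hn3) as (g & Hgz & (del & Hdel & Hdist) & _).
  set (F := fun w => epsilon (inhabits w) (fun u => U u /\ f u = w)).
  assert (HF : forall w, U (F w) /\ f (F w) = w).
  { intro w. unfold F. apply epsilon_spec. destruct (Hon w) as (u & Hu & Hfu). eauto. }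
  clearbody F.
  assert (HL := Hl n).
  assert (HDU0 : 0 < DU). { assert (0 < lam n / C) by (apply Rdiv_lt_0_compat; lra). lra. }
  assert (HFp : forall a, d (ps n) (F a) / lam n < 2).
  { intro a. apply div_lt_of; auto. pose proof (Ht (ps n) x (F a)). pose proof (HUb (F a) (proj1 (HF a))).
    unfold ball in H2. lra. }
  exists (lam n), F, g. split; [auto|]. split; [|split; [|split; [|split]]].
  - apply (inv_qs d eta etai U f F); auto.
  - intros a b. pose proof (diam_ub d U DU HDU (F a) (F b) (proj1 (HF a)) (proj1 (HF b))). lra.
  - intro a. destruct (diam_gap d U DU HDU (DU / 2) ltac:(lra)) as (u & v & Hu & Hv & Huv).
    destruct Hq as (Hinj & _).
    assert (Eu : F (f u) = u) by (apply Hinj; [apply HF|auto|apply HF]).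
    assert (Ev : F (f v) = v) by (apply Hinj; [apply HF|auto|apply HF]).
    assert (Hq4 : lam n / (4 * C) <= DU / 4).
    { unfold Rdiv. rewrite Rinv_mult. replace (lam n * (/ 4 * / C)) with (lam n / C / 4) by (unfold Rdiv; ring). lra. }
    pose proof (Ht u (F a) v). rewrite (Hs u (F a)) in H.
    destruct (Rle_dec (DU / 4) (d (F a) u)).
    + exists (f u). rewrite Eu. lra.
    + exists (f v). rewrite Ev. lra.
  - intros a b. pose proof (Hdist (F a) (F b) ltac:(pose proof (HFp a); lra) ltac:(pose proof (HFp b); lra)). lra.
  - intros a. rewrite <- Hgz.
    assert (Hpp : d (ps n) (ps n) / lam n < 3).
    { rewrite (proj2 (H1 _ _) eq_refl). unfold Rdiv; rewrite Rmult_0_l; lra. }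
    pose proof (Hdist (ps n) (F a) Hpp ltac:(pose proof (HFp a); lra)).
    apply Rabs_le_between in H. pose proof (HFp a). pose proof (inv_S_le1 k). lra.
Qed.

Definition inf (I : nat -> Prop) : Prop := forall N, exists k, (N <= k)%nat /\ I k.

Lemma pigeon {A} (T : list A) (P : A -> nat -> Prop) :
  (forall N, exists k, (N <= k)%nat /\ exists c, In c T /\ P c k) ->
  exists c, In c T /\ forall N, exists k, (N <= k)%nat /\ P c k.
Proof.
  induction T as [|a T IH]; intros H.
  - destruct (H 0%nat) as (k & _ & c & [] & _).
  - destruct (classic (forall N, exists k, (N <= k)%nat /\ P a k)) as [Ha|Ha].
    + exists a. split; [left; auto|auto].
    + apply not_all_ex_not in Ha. destruct Ha as [N0 HN0].
      destruct IH as (c & Hc & Hc2).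
      * intro N. destruct (H (max N N0)) as (k & Hk & c & Hc & Pk).
        exists k. split; [lia|]. exists c. split; auto.
        destruct Hc as [<-|]; auto. exfalso. apply HN0. exists k. split; [lia|auto].
      * exists c. split; [right; auto|auto].
Qed.

Definition Rspec {X Z} (dZ : Z -> Z -> R) (phi : nat -> X -> Z) (l : list X) (eps : R) (I I' : nat -> Prop) : Prop :=
  (forall k, I' k -> I k) /\ inf I' /\ forall q, In q l -> exists c, forall k, I' k -> dZ c (phi k q) < eps.

Lemma refine1 {X Z} (dZ : Z -> Z -> R) (phi : nat -> X -> Z) z :
  (forall eps, 0 < eps -> exists T : list Z, forall w, dZ z w < 3 -> exists c, In c T /\ dZ c w < eps) ->
  (forall k a, dZ z (phi k a) < 3) ->
  forall I q eps, 0 < eps -> inf I -> exists I', (forall k, I' k -> I k) /\ inf I' /\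
     exists c, forall k, I' k -> dZ c (phi k q) < eps.
Proof.
  intros HTB H3 I q eps He HI.
  destruct (HTB eps He) as [T HT].
  destruct (pigeon T (fun c k => I k /\ dZ c (phi k q) < eps)) as (c & Hc & Hinf).
  - intro N. destruct (HI N) as (k & Hk & Ik). exists k. split; auto.
    destruct (HT (phi k q) (H3 k q)) as (c & Hc & Hd). exists c; auto.
  - exists (fun k => I k /\ dZ c (phi k q) < eps). split; [tauto|]. split.
    + intro N. destruct (Hinf N) as (k & Hk & Pk). eauto.
    + exists c. tauto.
Qed.

Lemma refine_list {X Z} (dZ : Z -> Z -> R) (phi : nat -> X -> Z) z :
  (forall eps, 0 < eps -> exists T : list Z, forall w, dZ z w < 3 -> exists c, In c T /\ dZ c w < eps) ->
  (forall k a, dZ z (phi k a) < 3) ->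
  forall l I eps, 0 < eps -> inf I -> exists I', Rspec dZ phi l eps I I'.
Proof.
  intros HTB H3. induction l as [|q l IH]; intros I eps He HI.
  - exists I. split; [auto|]. split; auto. intros q [].
  - destruct (IH I eps He HI) as (I1 & H1s & H1i & H1c).
    destruct (refine1 dZ phi z HTB H3 I1 q eps He H1i) as (I2 & H2s & H2i & c & Hc).
    exists I2. split; [auto|]. split; auto.
    intros q' [<-|Hq']; [exists c; auto|].
    destruct (H1c q' Hq') as [c' Hc']. exists c'. auto.
Qed.

Definition Rfun {X Z} (dZ : Z -> Z -> R) (phi : nat -> X -> Z) (l : list X) (eps : R) (I : nat -> Prop) : nat -> Prop :=
  epsilon (inhabits I) (Rspec dZ phi l eps I).

Fixpoint stage {X Z} (dZ : Z -> Z -> R) (phi : nat -> X -> Z) (LL : nat -> list X) (m : nat) : nat -> Prop :=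
  Rfun dZ phi (LL m) (/ (INR m + 1))
    (match m with O => fun _ => True | S m' => stage dZ phi LL m' end).

Lemma stage_spec {X Z} (dZ : Z -> Z -> R) (phi : nat -> X -> Z) z LL :
  (forall eps, 0 < eps -> exists T : list Z, forall w, dZ z w < 3 -> exists c, In c T /\ dZ c w < eps) ->
  (forall k a, dZ z (phi k a) < 3) ->
  forall m, Rspec dZ phi (LL m) (/ (INR m + 1))
    (match m with O => fun _ => True | S m' => stage dZ phi LL m' end) (stage dZ phi LL m).
Proof.
  intros HTB H3. assert (Hpos : forall m, 0 < / (INR m + 1)).
  { intro m. apply Rinv_0_lt_compat. pose proof (pos_INR m). lra. }
  induction m as [|m IH].
  - simpl stage. unfold Rfun. apply epsilon_spec. apply (refine_list dZ phi z HTB H3); auto.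
    intro N. exists N. auto.
  - change (stage dZ phi LL (S m)) with (Rfun dZ phi (LL (S m)) (/ (INR (S m) + 1)) (stage dZ phi LL m)).
    unfold Rfun. apply epsilon_spec. apply (refine_list dZ phi z HTB H3); auto.
    destruct IH as (_ & Hi & _). auto.
Qed.

Lemma stage_nested {X Z} (dZ : Z -> Z -> R) (phi : nat -> X -> Z) z LL :
  (forall eps, 0 < eps -> exists T : list Z, forall w, dZ z w < 3 -> exists c, In c T /\ dZ c w < eps) ->
  (forall k a, dZ z (phi k a) < 3) ->
  forall m m', (m <= m')%nat -> forall k, stage dZ phi LL m' k -> stage dZ phi LL m k.
Proof.
  intros HTB H3 m m' Hmm'. induction Hmm' as [|m' Hle IH]; auto.
  intros k Hk. apply IH. destruct (stage_spec dZ phi z LL HTB H3 (S m')) as (Hs & _). apply Hs; auto.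
Qed.

Fixpoint Lacc {X} (L : nat -> list X) (m : nat) : list X :=
  match m with O => L O | S m' => L (S m') ++ Lacc L m' end.

Lemma Lacc_in {X} (L : nat -> list X) j q : In q (L j) -> forall m, (j <= m)%nat -> In q (Lacc L m).
Proof.
  intros Hq m Hm. induction Hm.
  - destruct j; simpl; auto. apply in_or_app; auto.
  - simpl. apply in_or_app; auto.
Qed.

Lemma inv_S_anti a b : (a <= b)%nat -> / (INR b + 1) <= / (INR a + 1).
Proof.
  intros H. apply le_INR in H. pose proof (pos_INR a). apply Rinv_le_contravar; lra.
Qed.

Lemma arch_S e : 0 < e -> exists N, / (INR N + 1) < e.
Proof.
  intros He. destruct (archimed_cor1 e He) as (N & HN & HN0). exists N.
  eapply Rle_lt_trans; [|exact HN]. apply lt_0_INR in HN0. apply Rinv_le_contravar; lra.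
Qed.

Lemma sub_cauchy {X Z} (d : X -> X -> R) (dZ : Z -> Z -> R) eta etai z (p : X) C M
  (phi : nat -> X -> Z) (Dk : nat -> X -> X -> R) :
  is_metric d -> proper d -> is_metric dZ -> homeo_pair eta etai -> 0 < C ->
  (forall a b, d a b <= M) ->
  (forall eps, 0 < eps -> exists T : list Z, forall w, dZ z w < 3 -> exists c, In c T /\ dZ c w < eps) ->
  (forall k a b, 0 <= Dk k a b) ->
  (forall k a, Dk k a a = 0) ->
  (forall k a b c, a <> c -> Dk k a b <= eta_prime etai (d a b / d a c) * Dk k a c) ->
  (forall k a b, Dk k a b <= C) ->
  (forall k a, exists c, / (4 * C) <= Dk k a c) ->
  (forall k a b, Rabs (dZ (phi k a) (phi k b) - Dk k a b) <= / (INR k + 1)) ->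
  (forall k a, dZ z (phi k a) < 3) ->
  exists sg : nat -> nat, (forall m, (m <= sg m)%nat) /\
    forall x e, 0 < e -> exists N, forall m n, (N <= m)%nat -> (N <= n)%nat ->
      dZ (phi (sg m) x) (phi (sg n) x) < e.
Proof.
  intros Hm Hp HmZ HH HC HM HTB HD0 HDd HD1 HD2 HD3 HD4 HD5.
  pose proof HmZ as (HZ0 & HZ1 & HZs & HZt).
  pose proof Hm as (H0 & H1 & Hs & Ht).
  set (L := fun j : nat => epsilon (inhabits nil) (fun l => forall x, exists q, In q l /\ d x q < / (INR j + 1))).
  assert (HL : forall j x, exists q, In q (L j) /\ d x q < / (INR j + 1)).
  { intro j. unfold L. apply epsilon_spec. apply (sep_X d p M); auto. apply inv_S_pos. }
  clearbody L.
  set (st := stage dZ phi (Lacc L)).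
  assert (Hst : forall m, Rspec dZ phi (Lacc L m) (/ (INR m + 1))
    (match m with O => fun _ => True | S m' => st m' end) (st m)).
  { apply (stage_spec dZ phi z (Lacc L) HTB HD5). }
  assert (Hnest : forall m m', (m <= m')%nat -> forall k, st m' k -> st m k).
  { apply (stage_nested dZ phi z (Lacc L) HTB HD5). }
  clearbody st.
  set (sg := fun m => epsilon (inhabits 0%nat) (fun k => (m <= k)%nat /\ st m k)).
  assert (Hsg : forall m, (m <= sg m)%nat /\ st m (sg m)).
  { intro m. unfold sg. apply epsilon_spec. destruct (Hst m) as (_ & Hi & _). apply Hi. }
  clearbody sg.
  exists sg. split; [intro m; apply Hsg|].
  assert (Hq : forall m0 q, In q (Lacc L m0) -> forall m n, (m0 <= m)%nat -> (m0 <= n)%nat ->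
     dZ (phi (sg m) q) (phi (sg n) q) < 2 * / (INR m0 + 1)).
  { intros m0 q Hin m n Hm0 Hn0. destruct (Hst m0) as (_ & _ & Hc). destruct (Hc q Hin) as [c Hc'].
    pose proof (Hc' (sg m) (Hnest m0 m Hm0 _ (proj2 (Hsg m)))).
    pose proof (Hc' (sg n) (Hnest m0 n Hn0 _ (proj2 (Hsg n)))).
    pose proof (HZt (phi (sg m) q) c (phi (sg n) q)). rewrite (HZs _ c) in H3. lra. }
  intros x e He.
  destruct (HD3 O x) as [cx Hcx].
  assert (H4C : 0 < / (4 * C)) by (apply Rinv_0_lt_compat; lra).
  assert (Hxc : x <> cx) by (intro E; subst; rewrite HDd in Hcx; lra).
  assert (Hdxc : 0 < d x cx) by (apply d_pos; auto).
  destruct (etap_small eta etai HH (e / (7 * C)) ltac:(apply Rdiv_lt_0_compat; lra)) as (de1 & Hde1 & Hsm).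
  destruct (arch_S (de1 * d x cx) ltac:(nra)) as [j Hj].
  destruct (HL j x) as (q & Hqin & Hxq).
  destruct (arch_S (e / 7) ltac:(lra)) as [N' HN'].
  exists (max j N'). intros m n Hmm Hnn.
  assert (HA : forall k, (max j N' <= k)%nat -> dZ (phi k x) (phi k q) < 2 * (e / 7)).
  { intros k Hk. pose proof (HD4 k x q) as Ha. apply Rabs_le_between in Ha.
    pose proof (HD1 k x q cx Hxc) as Hb. pose proof (HD2 k x cx).
    assert (Hr : d x q / d x cx < de1).
    { apply div_lt_of; auto. lra. }
    pose proof (Hsm (d x q / d x cx) ltac:(apply div_nonneg; auto) Hr) as Hs1.
    assert (eta_prime etai (d x q / d x cx) * Dk k x cx <= eta_prime etai (d x q / d x cx) * C).
    { apply Rmult_le_compat_l; auto. apply etap_nonneg with (eta := eta); auto. apply div_nonneg; auto. }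
    assert (eta_prime etai (d x q / d x cx) * C < e / 7).
    { apply Rmult_lt_reg_r with (r := / C). apply Rinv_0_lt_compat; lra.
      rewrite Rmult_assoc, Rinv_r, Rmult_1_r by lra.
      replace (e / 7 * / C) with (e / (7 * C)) by (field; lra). auto. }
    pose proof (inv_S_anti N' k ltac:(lia)). lra. }
  pose proof (HA (sg m) ltac:(pose proof (proj1 (Hsg m)); lia)).
  pose proof (HA (sg n) ltac:(pose proof (proj1 (Hsg n)); lia)).
  pose proof (Hq (max j N') q (Lacc_in L j q Hqin (max j N') ltac:(lia)) m n Hmm Hnn).
  pose proof (inv_S_anti N' (max j N') ltac:(lia)).
  pose proof (HZt (phi (sg m) x) (phi (sg m) q) (phi (sg n) x)).
  pose proof (HZt (phi (sg m) q) (phi (sg n) q) (phi (sg n) x)) as T8.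
  rewrite (HZs (phi (sg n) q) (phi (sg n) x)) in T8.
  lra.
Qed.

Lemma limit_embed {X Z} (d : X -> X -> R) (dZ : Z -> Z -> R) eta etai z (p : X) C M
  (phi : nat -> X -> Z) (Dk : nat -> X -> X -> R) :
  is_metric d -> proper d -> is_metric dZ -> complete dZ -> homeo_pair eta etai -> 0 < C -> 0 < M ->
  (forall a b, d a b <= M) ->
  (forall eps, 0 < eps -> exists T : list Z, forall w, dZ z w < 3 -> exists c, In c T /\ dZ c w < eps) ->
  (forall k a b, 0 <= Dk k a b) ->
  (forall k a, Dk k a a = 0) ->
  (forall k a b c, a <> c -> Dk k a b <= eta_prime etai (d a b / d a c) * Dk k a c) ->
  (forall k a b, Dk k a b <= C) ->
  (forall k a, exists c, / (4 * C) <= Dk k a c) ->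
  (forall k a b, Rabs (dZ (phi k a) (phi k b) - Dk k a b) <= / (INR k + 1)) ->
  (forall k a, dZ z (phi k a) < 3) ->
  exists f : X -> Z, qs_embedding d dZ (fun _ => True) f (eta_prime etai).
Proof.
  intros Hm Hp HmZ Hcomp HH HC HM0 HM HTB HD0 HDd HD1 HD2 HD3 HD4 HD5.
  destruct (sub_cauchy d dZ eta etai z p C M phi Dk Hm Hp HmZ HH HC HM HTB HD0 HDd HD1 HD2 HD3 HD4 HD5)
    as (sg & Hsg & Hcau).
  pose proof HmZ as (HZ0 & HZ1 & HZs & HZt).
  pose proof Hm as (H0 & H1 & Hs & Ht).
  set (f := fun x => epsilon (inhabits z) (fun l => forall e, 0 < e -> exists N, forall n, (N <= n)%nat -> dZ (phi (sg n) x) l < e)).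
  assert (Hf : forall x e, 0 < e -> exists N, forall n, (N <= n)%nat -> dZ (phi (sg n) x) (f x) < e).
  { intro x. unfold f. apply epsilon_spec. apply Hcomp. apply Hcau. }
  clearbody f.
  assert (Hlim : forall a b e, 0 < e -> exists N, forall m, (N <= m)%nat -> Rabs (dZ (f a) (f b) - Dk (sg m) a b) < e).
  { intros a b e He.
    destruct (Hf a (e/3) ltac:(lra)) as [Na HNa]. destruct (Hf b (e/3) ltac:(lra)) as [Nb HNb].
    destruct (arch_S (e/3) ltac:(lra)) as [N3 HN3].
    exists (max Na (max Nb N3)). intros m Hmm.
    specialize (HNa m ltac:(lia)). specialize (HNb m ltac:(lia)).
    pose proof (HD4 (sg m) a b) as Hd. apply Rabs_le_between in Hd.
    pose proof (inv_S_anti N3 (sg m) ltac:(pose proof (Hsg m); lia)).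
    pose proof (HZt (f a) (phi (sg m) a) (f b)). pose proof (HZt (phi (sg m) a) (phi (sg m) b) (f b)).
    pose proof (HZt (phi (sg m) a) (f a) (phi (sg m) b)). pose proof (HZt (f a) (f b) (phi (sg m) b)).
    rewrite (HZs (f a) (phi (sg m) a)) in *. rewrite (HZs (f b) (phi (sg m) b)) in *.
    apply Rabs_def1; lra. }
  assert (Pup : forall a b c, a <> c -> dZ (f a) (f b) <= eta_prime etai (d a b / d a c) * dZ (f a) (f c)).
  { intros a b c Hac. set (T := eta_prime etai (d a b / d a c)).
    assert (HT : 0 <= T) by (apply etap_nonneg with (eta := eta); auto; apply div_nonneg; auto; apply d_pos; auto).
    apply Rle_plus_epsilon. intros eps Heps.
    set (e' := eps / (T + 1)).
    assert (He' : 0 < e') by (unfold e'; apply Rdiv_lt_0_compat; lra).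
    assert (Hee : (T + 1) * e' = eps) by (unfold e'; field; lra).
    destruct (Hlim a b e' He') as [N1 HN1]. destruct (Hlim a c e' He') as [N2 HN2].
    specialize (HN1 (max N1 N2) ltac:(lia)). specialize (HN2 (max N1 N2) ltac:(lia)).
    apply Rabs_def2 in HN1. apply Rabs_def2 in HN2.
    pose proof (HD1 (sg (max N1 N2)) a b c Hac). fold T in H.
    assert (T * Dk (sg (max N1 N2)) a c <= T * (dZ (f a) (f c) + e')) by (apply Rmult_le_compat_l; lra).
    nra. }
  assert (Pcont : forall a b c, a <> c -> dZ (f a) (f b) <= eta_prime etai (d a b / d a c) * C).
  { intros a b c Hac. set (T := eta_prime etai (d a b / d a c)).
    assert (HT : 0 <= T) by (apply etap_nonneg with (eta := eta); auto; apply div_nonneg; auto; apply d_pos; auto).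
    apply Rle_plus_epsilon. intros eps Heps.
    destruct (Hlim a b eps Heps) as [N1 HN1]. specialize (HN1 N1 (le_n _)). apply Rabs_def2 in HN1.
    pose proof (HD1 (sg N1) a b c Hac). fold T in H.
    assert (T * Dk (sg N1) a c <= T * C) by (apply Rmult_le_compat_l; auto).
    lra. }
  assert (Plow : forall a b, a <> b -> / (4 * C) / eta_prime etai (M / d a b) <= dZ (f a) (f b)).
  { intros a b Hab.
    assert (Hdab : 0 < d a b) by (apply d_pos; auto).
    assert (HMd : 0 < M / d a b) by (apply Rdiv_lt_0_compat; auto).
    assert (HE : 0 < eta_prime etai (M / d a b)) by (apply etap_pos with (eta := eta); auto).
    assert (Hk : forall k, / (4 * C) / eta_prime etai (M / d a b) <= Dk k a b).
    { intro k. destruct (HD3 k a) as [c Hc].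
      assert (Hac : a <> c) by (intro E; subst; rewrite HDd in Hc; pose proof (Rinv_0_lt_compat (4*C) ltac:(lra)); lra).
      pose proof (HD1 k a c b Hab) as K1.
      assert (Hdac : 0 < d a c) by (apply d_pos; auto).
      assert (K2 : eta_prime etai (d a c / d a b) <= eta_prime etai (M / d a b)).
      { apply etap_mono with (eta := eta); auto. apply Rdiv_lt_0_compat; auto.
        unfold Rdiv. apply Rmult_le_compat_r; auto. left; apply Rinv_0_lt_compat; auto. }
      assert (/ (4 * C) <= eta_prime etai (M / d a b) * Dk k a b).
      { pose proof (HD0 k a b) as K3. pose proof (Rmult_le_compat_r (Dk k a b) _ _ K3 K2). lra. }
      apply Rmult_le_reg_l with (r := eta_prime etai (M / d a b)); auto.
      unfold Rdiv. rewrite (Rmult_comm (/ (4 * C))), <- Rmult_assoc, Rinv_r, Rmult_1_l by lra. auto. }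
    apply Rle_plus_epsilon. intros eps Heps.
    destruct (Hlim a b eps Heps) as [N1 HN1]. specialize (HN1 N1 (le_n _)). apply Rabs_def2 in HN1.
    pose proof (Hk (sg N1)). lra. }
  assert (Hbpos : forall t, 0 < t -> 0 < / (4 * C) / eta_prime etai (M / t)).
  { intros t Ht0. apply Rdiv_lt_0_compat. apply Rinv_0_lt_compat; lra.
    apply etap_pos with (eta := eta); auto. apply Rdiv_lt_0_compat; auto. }
  assert (Hfpos : forall a b, a <> b -> 0 < dZ (f a) (f b)).
  { intros a b Hab. pose proof (Plow a b Hab). pose proof (Hbpos (d a b) ltac:(apply d_pos; auto)). lra. }
  exists f. split; [|split; [|split]].
  - intros x y _ _ Heq. apply NNPP. intro Hxy. pose proof (Hfpos x y Hxy). rewrite Heq in H.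
    rewrite (proj2 (HZ1 _ _) eq_refl) in H. lra.
  - intros x _ e He. destruct (HD3 O x) as [cx Hcx].
    assert (Hxc : x <> cx) by (intro E; subst; rewrite HDd in Hcx; pose proof (Rinv_0_lt_compat (4*C) ltac:(lra)); lra).
    assert (Hdxc : 0 < d x cx) by (apply d_pos; auto).
    destruct (etap_small eta etai HH (e / (2 * C)) ltac:(apply Rdiv_lt_0_compat; lra)) as (de1 & Hde1 & Hsm).
    exists (de1 * d x cx). split; [nra|]. intros y _ Hy.
    pose proof (Pcont x y cx Hxc).
    assert (Hr : d x y / d x cx < de1) by (apply div_lt_of; auto).
    pose proof (Hsm (d x y / d x cx) ltac:(apply div_nonneg; auto) Hr).
    assert (eta_prime etai (d x y / d x cx) * C < e).
    { apply Rmult_lt_reg_r with (r := / C). apply Rinv_0_lt_compat; lra.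
      rewrite Rmult_assoc, Rinv_r, Rmult_1_r by lra.
      replace (e * / C) with (2 * (e / (2 * C))) by (field; lra). assert (0 < e / (2 * C)) by (apply Rdiv_lt_0_compat; lra). lra. }
    lra.
  - intros x _ e He. exists (/ (4 * C) / eta_prime etai (M / e)). split; [apply Hbpos; auto|].
    intros y _ Hy. apply Rnot_le_lt. intro Hle.
    assert (Hxy : x <> y) by (intro E; subst; rewrite (proj2 (H1 _ _) eq_refl) in Hle; lra).
    pose proof (Plow x y Hxy).
    assert (eta_prime etai (M / d x y) <= eta_prime etai (M / e)).
    { apply etap_mono with (eta := eta); auto. apply Rdiv_lt_0_compat; auto; lra.
      unfold Rdiv. apply Rmult_le_compat_l; [lra|]. apply Rinv_le_contravar; auto. }
    assert (HE1 : 0 < eta_prime etai (M / d x y)) by (apply etap_pos with (eta := eta); auto; apply Rdiv_lt_0_compat; lra).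
    assert (/ (4 * C) / eta_prime etai (M / e) <= / (4 * C) / eta_prime etai (M / d x y)).
    { unfold Rdiv. apply Rmult_le_compat_l; [left; apply Rinv_0_lt_compat; lra|]. apply Rinv_le_contravar; auto. }
    lra.
  - intros x y w _ _ _ Hxw. pose proof (Hfpos x w Hxw). pose proof (Pup x y w Hxw).
    unfold Rdiv at 1. apply Rmult_le_reg_r with (r := dZ (f x) (f w)); auto.
    rewrite Rmult_assoc, Rinv_l, Rmult_1_r by lra. auto.
Qed.

Lemma my_choice {A B} (P : A -> B -> Prop) : (forall a, exists b, P a b) -> exists f : A -> B, forall a, P a (f a).
Proof.
  intros H. exists (fun a => proj1_sig (constructive_indefinite_description _ (H a))).
  intro a. exact (proj2_sig (constructive_indefinite_description _ (H a))).
Qed.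

Theorem corollary5p1 (X : Type) (d : X -> X -> R) (p : X) (eta etai : R -> R) :
  is_metric d -> proper d -> doubling d -> homeo_pair eta etai ->
  (exists V : X -> Prop, is_open d V /\ V p /\
     exists D : X -> Prop, (forall x, D x -> V x) /\ dense_in d D V /\
       unif_comparable_self_qs d eta D) ->
  forall (Z : Type) (dZ : Z -> Z -> R) (z : Z), weak_tangent d p dZ z ->
  exists f : X -> Z, qs_embedding d dZ (fun _ => True) f (eta_prime etai).
Proof.
  intros Hm Hp _ HH (V & HV & Vp & D & HDV & Hden & r0 & C & Hdat) Z dZ z
    (HmZ & Hcomp & lam & ps & Hl & Hlc & Hpc & Hg).
  destruct (Hden p Vp 1 ltac:(lra)) as (x0 & Dx0 & _).
  pose proof (Hdat x0 Dx0) as Hd0. pose proof Hd0 as (Hr0 & HC & _).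
  destruct (bounded_X d eta etai x0 r0 C Hm HH Hd0) as [M0 HM0].
  set (M := Rmax M0 1).
  assert (HM : forall a b, d a b <= M) by (intros a b; eapply Rle_trans; [apply HM0|apply Rmax_l]).
  assert (HMp : 0 < M) by (pose proof (Rmax_r M0 1); unfold M; lra).
  clearbody M.
  pose proof (data_k d dZ p eta etai V D r0 C lam ps z Hm HH HV Vp HDV Hden Hdat Hl Hlc Hpc Hg HmZ) as Hk.
  assert (Hk' : forall k, exists t : R * (X -> X) * (X -> Z),
    let L := fst (fst t) in let F := snd (fst t) in let g := snd t in
   0 < L /\
   (forall a b c, a <> c -> d (F a) (F b) <= eta_prime etai (d a b / d a c) * d (F a) (F c)) /\
   (forall a b, d (F a) (F b) <= C * L) /\
   (forall a, exists c, L / (4 * C) <= d (F a) (F c)) /\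
   (forall a b, Rabs (dZ (g (F a)) (g (F b)) - d (F a) (F b) / L) <= / (INR k + 1)) /\
   (forall a, dZ z (g (F a)) < 3)).
  { intro k. destruct (Hk k) as (L & F & g & HP). exists (L, F, g). exact HP. }
  destruct (my_choice _ Hk') as [tf Htf]. clear Hk Hk'.
  set (Lk := fun k => fst (fst (tf k))). set (Fk := fun k => snd (fst (tf k))). set (gk := fun k => snd (tf k)).
  assert (HP : forall k, 0 < Lk k /\
   (forall a b c, a <> c -> d (Fk k a) (Fk k b) <= eta_prime etai (d a b / d a c) * d (Fk k a) (Fk k c)) /\
   (forall a b, d (Fk k a) (Fk k b) <= C * Lk k) /\
   (forall a, exists c, Lk k / (4 * C) <= d (Fk k a) (Fk k c)) /\
   (forall a b, Rabs (dZ (gk k (Fk k a)) (gk k (Fk k b)) - d (Fk k a) (Fk k b) / Lk k) <= / (INR k + 1)) /\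
   (forall a, dZ z (gk k (Fk k a)) < 3)) by (intro k; exact (Htf k)).
  clearbody Lk Fk gk. clear Htf tf.
  pose proof Hm as (H0 & H1 & Hs & Ht).
  apply (limit_embed d dZ eta etai z p C M (fun k a => gk k (Fk k a)) (fun k a b => d (Fk k a) (Fk k b) / Lk k));
    auto.
  - apply (TB_Z d dZ lam ps z); auto.
  - intros k a b. destruct (HP k) as (HL & _). apply div_nonneg; auto.
  - intros k a. rewrite (proj2 (H1 _ _) eq_refl). unfold Rdiv; apply Rmult_0_l.
  - intros k a b c Hac. destruct (HP k) as (HL & H2 & _). pose proof (H2 a b c Hac) as K.
    unfold Rdiv at 1 3. rewrite <- Rmult_assoc. apply Rmult_le_compat_r; auto.
    left; apply Rinv_0_lt_compat; auto.
  - intros k a b. destruct (HP k) as (HL & _ & H3 & _). pose proof (H3 a b).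
    apply Rmult_le_reg_r with (r := Lk k); auto. unfold Rdiv. rewrite Rmult_assoc, Rinv_l, Rmult_1_r by lra. auto.
  - intros k a. destruct (HP k) as (HL & _ & _ & H4 & _). destruct (H4 a) as [c Hc]. exists c.
    apply Rmult_le_reg_r with (r := Lk k); auto. unfold Rdiv. rewrite Rmult_assoc, Rinv_l, Rmult_1_r by lra.
    replace (/ (4 * C) * Lk k) with (Lk k / (4 * C)) by (unfold Rdiv; ring). auto.
  - intros k a b. apply (HP k).
  - intros k a. apply (HP k).
Qed.
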